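(* Let $\Lambda_{\mathbf q}$, the bar resolution $\mathbb B(\Lambda_{\mathbf q})$, the elements $f_\beta$ and the submodules $\mathbb P_m$ be as in the context. Then the bar differential maps $\mathbb P_m$ into $\mathbb P_{m-1}$ for every $m$, so $\mathbb P=(\mathbb P_m)_m$ is a subcomplex of $\mathbb B(\Lambda_{\mathbf q})$; moreover, for $|\beta|=m$, the bar differential sends $\tilde f_\beta$ to $$\sum_{j=1}^n\Big(\prod_{l<j}q_{l,j}^{\beta_l}\,x_j\tilde f_{\beta-[j]}+(-1)^m\prod_{l>j}q_{j,l}^{\beta_l}\,\tilde f_{\beta-[j]}x_j\Big).$$
   Context: $k$ is a field of characteristic $0$. Fix $n\ge1$ and $q_{i,j}\in k^*$ with $q_{j,i}=q_{i,j}^{-1}$, $q_{i,i}=-1$, and let $\Lambda_{\mathbf q}=k\langle x_1,\dots,x_n\mid x_ix_j=-q_{i,j}x_jx_i,\ x_i^2=0\rangle$. The bar resolution $\mathbb B(\Lambda_{\mathbf q})$ has $\mathbb B_m=\Lambda_{\mathbf q}^{\otimes(m+2)}$ (tensor over $k$) with differential $d(a_0\otimes\cdots\otimes a_{m+1})=\sum_{i=0}^m(-1)^ia_0\otimes\cdots\otimes a_ia_{i+1}\otimes\cdots\otimes a_{m+1}$. For $\beta\in\mathbb Z^n$ let $|\beta|=\sum\beta_i$ and $[l]$ the $l$-th unit vector. Define $f_\beta\in\Lambda_{\mathbf q}^{\otimes|\beta|}$ by: $f_{(0,\dots,0)}=1$, $f_{[l]}=x_l$, $f_\beta=0$ if some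 $\beta_l<0$, and for $\beta\in\mathbb N^n$, $f_\beta=\sum_{l=1}^n\prod_{k>l}q_{l,k}^{\beta_k}\,f_{\beta-[l]}\otimes x_l$. Put $\tilde f_\beta=1\otimes f_\beta\otimes 1\in\mathbb B_{|\beta|}$ and let $\mathbb P_m=\bigoplus_{\beta\in\mathbb N^n,|\beta|=m}\Lambda_{\mathbf q}\otimes f_\beta\otimes\Lambda_{\mathbf q}\subseteq\mathbb B_m$, the $\Lambda_{\mathbf q}^e$-submodule generated by the $\tilde f_\beta$ with $|\beta|=m$. *)

(* Defs.v *)
From HB Require Import structures.
From mathcomp Require Import all_boot all_order all_algebra.
Set Implicit Arguments. Unset Strict Implicit. Unset Printing Implicit Defensive.
Import GRing.Theory.
Local Open Scope ring_scope.

Section QExt.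
Variables (k : fieldType) (n : nat) (q : 'I_n -> 'I_n -> k).

(* Lambda_q as a k-vector space: basis x_S = x_{s1}...x_{sr} (s1<...<sr), S a subset of 'I_n.
   (generators are indexed 0..n-1 instead of 1..n) *)
Definition Lam := {ffun {set 'I_n} -> k^o}.
HB.instance Definition _ := GRing.Lmodule.copy Lam {ffun {set 'I_n} -> k^o}.
Definition lbasis (S : {set 'I_n}) : Lam := [ffun T => (T == S)%:R].
Definition lgen (i : 'I_n) : Lam := lbasis [set i].
Definition lone : Lam := lbasis set0.
(* x_S x_T = prod_{s in S, t in T, t < s} (-q_{s,t}) x_{S u T} if S,T disjoint, else 0
   (each inversion x_s x_t = -q_{s,t} x_t x_s; x_i^2 = 0). *)
Definition mono_coef (S T : {set 'I_n}) : k :=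
  \prod_(s in S) \prod_(t in T | (t < s)%N) (- q s t).
Definition mono_mul (S T : {set 'I_n}) : Lam :=
  if [disjoint S & T] then mono_coef S T *: lbasis (S :|: T) else 0.
Definition lmul (a b : Lam) : Lam :=
  \sum_(S : {set 'I_n}) \sum_(T : {set 'I_n}) (a S * b T) *: mono_mul S T.

(* Lambda_q^{(x) r} over k: basis indexed by words of r basis monomials. *)
Definition word r := {ffun 'I_r -> {set 'I_n}}.
Definition Tens r := {ffun word r -> k^o}.
HB.instance Definition _ r := GRing.Lmodule.copy (Tens r) {ffun word r -> k^o}.
Definition pure r (s : seq Lam) : Tens r :=
  [ffun w : word r => \prod_(i < r) (nth 0 s i) (w i)].
Definition wseq r (w : word r) : seq Lam := [seq lbasis (w i) | i <- enum 'I_r].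
Definition merge (i : nat) (s : seq Lam) : seq Lam :=
  take i s ++ lmul (nth 0 s i) (nth 0 s i.+1) :: drop i.+2 s.

(* bar differential B_m = Tens m.+2 -> B_{m-1} = Tens m.+1 (take r = m.+1),
   d(a_0 (x) ... (x) a_{m+1}) = sum_{i=0}^m (-1)^i a_0 (x) ... (x) a_i a_{i+1} (x) ... *)
Definition bar_d r (t : Tens r.+1) : Tens r :=
  \sum_(w : word r.+1) t w *: \sum_(i < r) (-1) ^+ i *: pure r (merge i (wseq w)).

Definition lact r (a : Lam) (t : Tens r) : Tens r :=
  \sum_(w : word r) t w *:
    pure r (match wseq w with x :: s => lmul a x :: s | [::] => [::] end).
Definition ract r (a : Lam) (t : Tens r) : Tens r :=
  \sum_(w : word r) t w *:
    pure r (match wseq w with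
            | x :: s => rcons (belast x s) (lmul (last x s) a)
            | [::] => [::] end).

Definition tensR m (t : Tens m) (a : Lam) : Tens m.+1 :=
  \sum_(w : word m) t w *: pure m.+1 (rcons (wseq w) a).
Definition tilde m (t : Tens m) : Tens m.+2 :=
  \sum_(w : word m) t w *: pure m.+2 (lone :: rcons (wseq w) lone).

Definition mvec := {ffun 'I_n -> nat}.
Definition bsum (b : mvec) : nat := (\sum_(i < n) b i)%N.
(* beta - [l] (only used when beta_l > 0) *)
Definition bsub (b : mvec) (l : 'I_n) : mvec :=
  [ffun i => if i == l then (b i).-1 else b i].

(* fT m b = f_b when |b| = m, and 0 otherwise *)
Fixpoint fT (m : nat) (b : mvec) {struct m} : Tens m :=
  match m return Tens m with
  | 0 => if bsum b == 0%N then pure 0 [::] else 0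
  | m'.+1 => \sum_(l < n)
      (if (0 < b l)%N then
         (\prod_(j < n | (l < j)%N) q l j ^+ b j) *: tensR (fT m' (bsub b l)) (lgen l)
       else 0)
  end.

Definition ftilde m (b : mvec) : Tens m.+2 := tilde (fT m b).

(* P_m: the Lambda^e-submodule of B_m generated by the ftilde_b with |b| = m,
   i.e. all finite sums of a * ftilde_b * c *)
Definition inP m (t : Tens m.+2) : Prop :=
  exists s : seq (Lam * mvec * Lam),
    all (fun x => bsum x.1.2 == m) s /\
    t = \sum_(x <- s) lact x.1.1 (ract x.2 (ftilde m x.1.2)).

End QExt.

(* Main.v *)
Require Import Defs.
From HB Require Import structures.
From mathcomp Require Import all_boot all_order all_algebra zify ring.
Set Implicit Arguments. Unset Strict Implicit. Unset Printing Implicit Defensive.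
Import GRing.Theory.
Local Open Scope ring_scope.

Section S.
Variables (k : fieldType) (n : nat) (q : 'I_n -> 'I_n -> k).
Local Notation LL := (Lam k n).
Local Notation TT r := (Tens k n r).
Local Notation WW r := (word n r).
Local Notation lb := (@lbasis k n).

Definition ext r r' (F : WW r -> TT r') (t : TT r) : TT r' :=
  \sum_(w : WW r) t w *: F w.
Definition E r (ss : seq {set 'I_n}) : TT r := pure r (map lb ss).
Definition wl r (w : WW r) : seq {set 'I_n} := [seq w i | i <- enum 'I_r].
Definition wof r (ss : seq {set 'I_n}) : WW r := [ffun i : 'I_r => nth set0 ss i].

Lemma wseqE r (w : WW r) : wseq k w = map lb (wl w).
Proof. by rewrite /wseq /wl map_comp. Qed.

Lemma size_wl r (w : WW r) : size (wl w) = r.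
Proof. by rewrite /wl size_map size_enum_ord. Qed.

Lemma wofK r ss : size ss = r -> wl (wof r ss) = ss.
Proof.
move=> hs; rewrite /wl.
have -> : [seq (wof r ss) i | i <- enum 'I_r] = map (nth set0 ss) (map val (enum 'I_r)).
  by rewrite -map_comp; apply: eq_map => i; rewrite /= ffunE.
by rewrite val_enum_ord map_nth_iota0 ?hs // -hs take_size.
Qed.

Lemma pureE r (s : seq LL) (w : WW r) : pure r s w = \prod_(i < r) (nth 0 s i) (w i).
Proof. by rewrite ffunE. Qed.

Lemma lbE (S T : {set 'I_n}) : lb S T = (T == S)%:R.
Proof. by rewrite ffunE. Qed.

Lemma nth_wseq r (w : WW r) (i : 'I_r) : nth 0 (wseq k w) i = lb (w i).
Proof.
by rewrite /wseq (nth_map i) ?size_enum_ord // nth_ord_enum.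
Qed.

Lemma e_delta r (w w' : WW r) : pure r (wseq k w') w = (w == w')%:R.
Proof.
rewrite pureE; under eq_bigr => i _ do rewrite nth_wseq lbE.
case: (eqVneq w w') => [->|ne].
  by rewrite big1 // => i _; rewrite eqxx.
have [i hi] : exists i, w i != w' i.
  apply/existsP; apply: contraR ne => /existsPn h; apply/eqP/ffunP => i.
  by apply/eqP; move: (h i); rewrite negbK.
by rewrite (bigD1 i) //= (negbTE hi) mul0r.
Qed.

Lemma expand r (t : TT r) : t = \sum_(w : WW r) t w *: pure r (wseq k w).
Proof.
apply/ffunP => w0; rewrite sum_ffunE (bigD1 w0) //= big1 ?addr0.
  by rewrite ffunE e_delta eqxx; exact: (esym (mulr1 _)).
by move=> w hw; rewrite ffunE e_delta eq_sym (negbTE hw); exact: (mulr0 _).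
Qed.

Lemma ext_e r r' (F : WW r -> TT r') w : ext F (pure r (wseq k w)) = F w.
Proof.
rewrite /ext (bigD1 w) //= big1 ?addr0.
  by rewrite e_delta eqxx scale1r.
by move=> w' hw; rewrite e_delta (negbTE hw) scale0r.
Qed.

Lemma E_wl r (w : WW r) : E r (wl w) = pure r (wseq k w).
Proof. by rewrite /E wseqE. Qed.

Lemma ext_E r r' (F : WW r -> TT r') ss : size ss = r -> ext F (E r ss) = F (wof r ss).
Proof. by move=> hs; rewrite -(wofK hs) E_wl ext_e wofK. Qed.

Lemma ext_add r r' (F : WW r -> TT r') t u : ext F (t + u) = ext F t + ext F u.
Proof.
by rewrite /ext -big_split; apply: eq_bigr => w _; rewrite ffunE scalerDl.
Qed.
Lemma ext_scale r r' (F : WW r -> TT r') c t : ext F (c *: t) = c *: ext F t.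
Proof.
by rewrite /ext scaler_sumr; apply: eq_bigr => w _; rewrite ffunE scalerA.
Qed.
Lemma ext0 r r' (F : WW r -> TT r') : ext F 0 = 0.
Proof. by rewrite /ext big1 // => w _; rewrite ffunE scale0r. Qed.
Lemma ext_sum r r' (F : WW r -> TT r') I (s : seq I) (P : pred I) G :
  ext F (\sum_(i <- s | P i) G i) = \sum_(i <- s | P i) ext F (G i).
Proof. exact: (big_morph _ (ext_add F) (ext0 F)). Qed.

Lemma ext_eq r r' (F G : WW r -> TT r') t : (forall w, F w = G w) -> ext F t = ext G t.
Proof. by move=> h; apply: eq_bigr => w _; rewrite h. Qed.

Definition lin r r' (L : TT r -> TT r') :=
  forall t, L t = ext (fun w => L (pure r (wseq k w))) t.

Lemma lin_ext r r' (F : WW r -> TT r') : lin (ext F).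
Proof. by move=> t; apply: ext_eq => w; rewrite ext_e. Qed.

Lemma ext_comp r r' r'' (F : WW r' -> TT r'') (G : WW r -> TT r') t :
  ext F (ext G t) = ext (fun w => ext F (G w)) t.
Proof. by rewrite [ext G t]/ext ext_sum; apply: eq_bigr => w _; rewrite ext_scale. Qed.

Lemma linD r r' (L : TT r -> TT r') : lin L -> forall t u, L (t + u) = L t + L u.
Proof. by move=> h t u; rewrite !(h (_ + _)) ext_add -!h. Qed.
Lemma linZ r r' (L : TT r -> TT r') : lin L -> forall c t, L (c *: t) = c *: L t.
Proof. by move=> h c t; rewrite h ext_scale -h. Qed.
Lemma lin0 r r' (L : TT r -> TT r') : lin L -> L 0 = 0.
Proof. by move=> h; rewrite h ext0. Qed.
Lemma linS r r' (L : TT r -> TT r') : lin L ->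
  forall I (s : seq I) (P : pred I) G, L (\sum_(i <- s | P i) G i) = \sum_(i <- s | P i) L (G i).
Proof. by move=> h I s P G; apply: (big_morph _ (linD h) (lin0 h)). Qed.
Lemma linN r r' (L : TT r -> TT r') : lin L -> forall t, L (- t) = - L t.
Proof. by move=> h t; rewrite -scaleN1r linZ // scaleN1r. Qed.

Lemma lin_comp r r' r'' (L1 : TT r' -> TT r'') (L2 : TT r -> TT r') :
  lin L1 -> lin L2 -> lin (fun t => L1 (L2 t)).
Proof.
move=> h1 h2 t; rewrite h2 h1 ext_comp; apply: ext_eq => w.
exact: (esym (h1 _)).
Qed.
Lemma lin_add r r' (L1 L2 : TT r -> TT r') : lin L1 -> lin L2 -> lin (fun t => L1 t + L2 t).
Proof.
move=> h1 h2 t; rewrite h1 h2 /ext -big_split; apply: eq_bigr => w _.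
by rewrite scalerDr.
Qed.
Lemma lin_scale r r' (L : TT r -> TT r') c : lin L -> lin (fun t => c *: L t).
Proof.
move=> h t; rewrite h /ext scaler_sumr; apply: eq_bigr => w _.
by rewrite !scalerA mulrC.
Qed.
Lemma lin_opp r r' (L : TT r -> TT r') : lin L -> lin (fun t => - L t).
Proof.
move=> h t; rewrite -scaleN1r (lin_scale (-1) h); apply: ext_eq => w; by rewrite scaleN1r.
Qed.

Lemma lin_eq r r' (L1 L2 : TT r -> TT r') : lin L1 -> lin L2 ->
  (forall ss, size ss = r -> L1 (E r ss) = L2 (E r ss)) -> forall t, L1 t = L2 t.
Proof.
move=> h1 h2 h t; rewrite h1 h2; apply: ext_eq => w.
by rewrite -!E_wl h // size_wl.
Qed.


Definition mmc (S T : {set 'I_n}) : k := if [disjoint S & T] then mono_coef q S T else 0.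
Definition mergeE i (ss : seq {set 'I_n}) :=
  take i ss ++ (nth set0 ss i :|: nth set0 ss i.+1) :: drop i.+2 ss.
Definition prep m (a : LL) (t : TT m) : TT m.+1 :=
  ext (fun w => pure m.+1 (a :: wseq k w)) t.

Lemma mono_mulE S T : mono_mul q S T = mmc S T *: lb (S :|: T).
Proof. by rewrite /mono_mul /mmc; case: ifP; rewrite ?scale0r. Qed.

Lemma lmul_lb S T : lmul q (lb S) (lb T) = mmc S T *: lb (S :|: T).
Proof.
rewrite /lmul (bigD1 S) //= [X in _ + X]big1 ?addr0; last first.
  by move=> S' hS'; rewrite big1 // => T' _; rewrite !lbE (negbTE hS') mul0r scale0r.
rewrite (bigD1 T) //= [X in _ + X]big1 ?addr0; last first.
  by move=> T' hT'; rewrite !lbE (negbTE hT') mulr0 scale0r.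
by rewrite !lbE !eqxx mul1r scale1r mono_mulE.
Qed.

Lemma nth_cat_ne (s1 s2 : seq LL) y y' j : j != size s1 ->
  nth 0 (s1 ++ y :: s2) j = nth 0 (s1 ++ y' :: s2) j.
Proof.
move=> hj; rewrite !nth_cat; case: ltnP => // h.
case E0: (j - size s1)%N => [|j'] //.
by move: hj; rewrite eqn_leq h andbT -subn_eq0 E0.
Qed.

Lemma pure_slot r (s1 s2 : seq LL) (h : (size s1 < r)%N) y (w : WW r) :
  pure r (s1 ++ y :: s2) w = y (w (Ordinal h)) *
    \prod_(j < r | j != Ordinal h) nth 0 (s1 ++ 0 :: s2) j (w j).
Proof.
rewrite pureE (bigD1 (Ordinal h)) //= nth_cat ltnn subnn /=; congr (_ * _).
apply: eq_bigr => j hj; rewrite (@nth_cat_ne _ _ y 0) //.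
Qed.

Lemma pure_catZ r (s1 s2 : seq LL) c x : (size s1 < r)%N ->
  pure r (s1 ++ (c *: x) :: s2) = c *: pure r (s1 ++ x :: s2).
Proof.
move=> h; apply/ffunP => w; rewrite [RHS]ffunE !(pure_slot _ h) ffunE.
by rewrite -scalerAl.
Qed.

Lemma pure_catD r (s1 s2 : seq LL) x y : (size s1 < r)%N ->
  pure r (s1 ++ (x + y) :: s2) = pure r (s1 ++ x :: s2) + pure r (s1 ++ y :: s2).
Proof.
move=> h; apply/ffunP => w; rewrite [RHS]ffunE !(pure_slot _ h) ffunE.
exact: (mulrDl _ _ _).
Qed.

Lemma pure_cat0 r (s1 s2 : seq LL) : (size s1 < r)%N -> pure r (s1 ++ 0 :: s2) = 0.
Proof. by move=> h; rewrite -(scale0r (0 : LL)) pure_catZ // scale0r. Qed.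

Lemma pure_catS r (s1 s2 : seq LL) I (s : seq I) (P : pred I) F : (size s1 < r)%N ->
  pure r (s1 ++ (\sum_(i <- s | P i) F i) :: s2) = \sum_(i <- s | P i) pure r (s1 ++ F i :: s2).
Proof.
move=> h; apply: (big_morph (fun x => pure r (s1 ++ x :: s2))) => [x y|].
  exact: pure_catD. exact: pure_cat0.
Qed.

Lemma lin_bar_d {r} : lin (@bar_d k n q r).
Proof. exact: lin_ext. Qed.
Lemma lin_lact r a : lin (@lact k n q r a).
Proof. exact: lin_ext. Qed.
Lemma lin_ract r a : lin (@ract k n q r a).
Proof. exact: lin_ext. Qed.
Lemma lin_tensR r a : lin (fun t : TT r => tensR t a).
Proof. exact: lin_ext. Qed.
Lemma lin_tilde {r} : lin (@tilde k n r).
Proof. exact: lin_ext. Qed.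
Lemma lin_prep r a : lin (@prep r a).
Proof. exact: lin_ext. Qed.

Lemma tensR_E m ss S : size ss = m -> tensR (E m ss) (lb S) = E m.+1 (rcons ss S).
Proof.
move=> h; rewrite /tensR -/(ext _ _) ext_E // wseqE wofK //.
by rewrite /E map_rcons.
Qed.

Lemma prep_E m ss S : size ss = m -> prep (lb S) (E m ss) = E m.+1 (S :: ss).
Proof. by move=> h; rewrite /prep ext_E // wseqE wofK. Qed.

Lemma tilde_E m ss : size ss = m -> tilde (E m ss) = E m.+2 (set0 :: rcons ss set0).
Proof.
move=> h; rewrite /tilde -/(ext _ _) ext_E // wseqE wofK //.
by rewrite /E /= map_rcons.
Qed.


Lemma E_cat r s1 S s2 : E r (s1 ++ S :: s2) = pure r (map lb s1 ++ lb S :: map lb s2).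
Proof. by rewrite /E map_cat. Qed.

Lemma lact_E r ss S T : size ss = r ->
  lact q (lb S) (E r.+1 (T :: ss)) = mmc S T *: E r.+1 ((S :|: T) :: ss).
Proof.
move=> h; rewrite /lact -/(ext _ _) ext_E /= ?h // wseqE wofK /= ?h //.
by rewrite lmul_lb (pure_catZ (s1:=[::])).
Qed.

Lemma match_rcons (f : LL -> LL) (l : seq LL) y :
  match rcons l y with x :: s => rcons (belast x s) (f (last x s)) | [::] => [::] end
  = rcons l (f y).
Proof. by case: l => //= x l; rewrite belast_rcons last_rcons. Qed.

Lemma ract_E r ss S T : size ss = r ->
  ract q (lb S) (E r.+1 (rcons ss T)) = mmc T S *: E r.+1 (rcons ss (T :|: S)).
Proof.
move=> h; rewrite /ract -/(ext _ _) ext_E ?size_rcons ?h // wseqE wofK ?size_rcons ?h //.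
rewrite map_rcons (match_rcons (fun x => lmul q x (lb S))) lmul_lb -cats1 pure_catZ ?size_map ?h //.
by rewrite /E map_rcons cats1.
Qed.

Lemma bar_dE r ss : size ss = r.+1 ->
  bar_d q (E r.+1 ss) = \sum_(i < r) ((-1) ^+ i * mmc (nth set0 ss i) (nth set0 ss i.+1))
     *: E r (mergeE i ss).
Proof.
move=> h; rewrite /bar_d -/(ext _ _) ext_E // wseqE wofK //.
apply: eq_bigr => i _; have hi := ltn_ord i.
rewrite /Defs.merge !(nth_map set0) ?h; try lia.
rewrite lmul_lb pure_catZ ?size_takel ?size_map ?h; try lia.
by rewrite scalerA /E /mergeE map_cat /= map_take map_drop.
Qed.


Lemma dUl (S T U : {set 'I_n}) :
  [disjoint S :|: T & U] = [disjoint S & U] && [disjoint T & U].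
Proof. by rewrite !disjoints_subset subUset. Qed.
Lemma dUr (S T U : {set 'I_n}) :
  [disjoint S & T :|: U] = [disjoint S & T] && [disjoint S & U].
Proof. by rewrite disjoint_sym dUl !(disjoint_sym S). Qed.

Lemma mcUl (S T U : {set 'I_n}) : [disjoint S & T] ->
  mono_coef q (S :|: T) U = mono_coef q S U * mono_coef q T U.
Proof.
move=> d; rewrite /mono_coef (eq_bigl [predU S & T]) ?bigU // => i.
by rewrite !inE.
Qed.

Lemma mcUr (S T U : {set 'I_n}) : [disjoint T & U] ->
  mono_coef q S (T :|: U) = mono_coef q S T * mono_coef q S U.
Proof.
move=> d; rewrite /mono_coef -big_split; apply: eq_bigr => s _ /=.
rewrite !big_mkcondr /=.
by rewrite (eq_bigl [predU T & U]) ?bigU // => i; rewrite !inE.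
Qed.

Lemma mmc0l (T : {set 'I_n}) : mmc set0 T = 1.
Proof.
rewrite /mmc disjoints_subset sub0set /mono_coef.
by rewrite big_set0.
Qed.

Lemma mmc0r (S : {set 'I_n}) : mmc S set0 = 1.
Proof.
rewrite /mmc disjoint_sym disjoints_subset sub0set /mono_coef.
by rewrite big1 // => s _; rewrite big_pred0 // => t; rewrite inE.
Qed.

Lemma mmc_assoc (S T U : {set 'I_n}) : mmc T U * mmc S (T :|: U) = mmc S T * mmc (S :|: T) U.
Proof.
rewrite /mmc dUl dUr.
case: (boolP [disjoint S & T]) => dST; case: (boolP [disjoint S & U]) => dSU;
  case: (boolP [disjoint T & U]) => dTU; rewrite /= ?mulr0 ?mul0r //.
rewrite mcUl // mcUr //.
by rewrite mulrA [mono_coef q T U * _]mulrC -mulrA [mono_coef q T U * _]mulrC mulrA.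
Qed.


Lemma lin_id {r} : lin (fun t : TT r => t).
Proof. move=> t; exact: expand. Qed.

Lemma size_mergeE i ss r : (i < r)%N -> size ss = r.+1 -> size (mergeE i ss) = r.
Proof.
by move=> hi hs; rewrite /mergeE size_cat /= size_takel ?size_drop ?hs; lia.
Qed.

Lemma mergeE_rcons i ss S : (i.+1 < size ss)%N ->
  mergeE i (rcons ss S) = rcons (mergeE i ss) S.
Proof.
move=> h; rewrite /mergeE !nth_rcons.
have h1 : (i < size ss)%N by lia.

rewrite h1 h -cats1 takel_cat; last lia.
by rewrite cats1 drop_rcons // rcons_cat.
Qed.

Lemma mergeE_rcons_last i ss S : size ss = i.+1 ->
  mergeE i (rcons ss S) = rcons (take i ss) (nth set0 ss i :|: S).
Proof.
move=> h; rewrite /mergeE !nth_rcons h ltnSn ltnn eqxx -!cats1 takel_cat; last lia.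
by rewrite drop_oversize // size_cat h /=; lia.
Qed.

Lemma ss_rcons (ss : seq {set 'I_n}) r : size ss = r.+1 -> ss = rcons (take r ss) (nth set0 ss r).
Proof. by move=> h; rewrite -take_nth ?h // -h take_size. Qed.

Lemma lact_one r (t : TT r.+1) : lact q (lb set0) t = t.
Proof.
apply: (lin_eq (lin_lact _) lin_id) => -[|T ss] //= [h].
by rewrite lact_E // mmc0l set0U scale1r.
Qed.

Lemma ract_one r (t : TT r.+1) : ract q (lb set0) t = t.
Proof.
apply: (lin_eq (lin_ract _) lin_id) => ss; case/lastP: ss => [|ss T] //.
rewrite size_rcons => -[h].
by rewrite ract_E // mmc0r setU0 scale1r.
Qed.

Lemma tilde_split m (t : TT m) : tilde t = prep (lb set0) (tensR t (lb set0)).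
Proof.
apply: (lin_eq lin_tilde (lin_comp (lin_prep _) (lin_tensR _))) => ss h.
by rewrite tilde_E // tensR_E // prep_E // size_rcons h.
Qed.

Lemma bar_d_prep r U (t : TT r.+1) :
  bar_d q (prep (lb U) t) = lact q (lb U) t - prep (lb U) (bar_d q t).
Proof.
apply: (lin_eq (lin_comp lin_bar_d (lin_prep _))
   (lin_add (lin_lact _) (lin_opp (lin_comp (lin_prep _) lin_bar_d)))) => -[|T ss] //= [h].
rewrite prep_E /= ?h // (bar_dE (ss := U :: T :: ss)) /= ?h // big_ord_recl /=.
rewrite expr0 mul1r lact_E // bar_dE /= ?h // (linS (lin_prep _)) -sumrN.
congr (_ + _); [by rewrite /mergeE /= drop0 | apply: eq_bigr => i _].
have -> : bump 0 i = i.+1 by rewrite /bump add1n.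
rewrite !add0n (linZ (lin_prep _)) prep_E; last by apply: size_mergeE; rewrite /= ?h.
by rewrite exprS mulN1r mulNr scaleNr.
Qed.

Lemma bar_d_tensR r S (t : TT r.+1) :
  bar_d q (tensR t (lb S)) = tensR (bar_d q t) (lb S) + (-1) ^+ r *: ract q (lb S) t.
Proof.
apply: (lin_eq (lin_comp lin_bar_d (lin_tensR _))
   (lin_add (lin_comp (lin_tensR _) lin_bar_d) (lin_scale _ (lin_ract _)))) => ss h.
rewrite tensR_E // bar_dE ?size_rcons ?h // big_ord_recr /=.
rewrite bar_dE // (linS (lin_tensR _)).
congr (_ + _).
  apply: eq_bigr => i _; have hi := ltn_ord i.
  rewrite (linZ (lin_tensR _)) tensR_E; last exact: size_mergeE.
  rewrite !nth_rcons h; have -> : (i < r.+1)%N by lia.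
  have -> : (i.+1 < r.+1)%N by lia.
  by rewrite mergeE_rcons // h.
rewrite [in E r.+1 ss](ss_rcons h) ract_E ?size_takel ?h // scalerA.
rewrite mergeE_rcons_last // !nth_rcons h ltnSn ltnn eqxx.
by rewrite mulrC.
Qed.


Lemma mergeE_cons i X ss : mergeE i.+1 (X :: ss) = X :: mergeE i ss.
Proof. by []. Qed.
Lemma mergeE0 X Y ss : mergeE 0 (X :: Y :: ss) = (X :|: Y) :: ss.
Proof. by rewrite /mergeE /= drop0. Qed.

Lemma bar_d_lact r S (t : TT r.+2) :
  bar_d q (lact q (lb S) t) = lact q (lb S) (bar_d q t).
Proof.
apply: (lin_eq (lin_comp lin_bar_d (lin_lact _)) (lin_comp (lin_lact _) lin_bar_d))
  => -[|T ss] //= [h].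
rewrite lact_E // (linZ lin_bar_d) bar_dE /= ?h // big_ord_recl.
rewrite bar_dE /= ?h // (linS (lin_lact _)) big_ord_recl /=.
case: ss h => [|V ss] //= [h].
rewrite !mergeE0 (linZ (lin_lact _)) !lact_E // scalerDr !scalerA.
congr (_ + _).
  by rewrite !expr0 !mul1r setUA mmc_assoc.
rewrite scaler_sumr; apply: eq_bigr => i _.
have -> : bump 0 i = i.+1 by rewrite /bump add1n.
rewrite !add0n !mergeE_cons (linZ (lin_lact _)) lact_E; last first.
  by apply: size_mergeE => //=; rewrite h.
by rewrite !scalerA mulrC.
Qed.

Lemma bar_d_ract r S (t : TT r.+2) :
  bar_d q (ract q (lb S) t) = ract q (lb S) (bar_d q t).
Proof.
apply: (lin_eq (lin_comp lin_bar_d (lin_ract _)) (lin_comp (lin_ract _) lin_bar_d))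
  => ss; case/lastP: ss => [|ss V] //; rewrite size_rcons => -[h].
rewrite ract_E // (linZ lin_bar_d) bar_dE ?size_rcons ?h // big_ord_recr /=.
rewrite bar_dE ?size_rcons ?h // (linS (lin_ract _)) big_ord_recr /= scalerDr.
congr (_ + _).
  rewrite scaler_sumr; apply: eq_bigr => i _; have hi := ltn_ord i.
  rewrite !nth_rcons h; have -> : (i < r.+1)%N by lia.
  have -> : (i.+1 < r.+1)%N by lia.
  rewrite !mergeE_rcons ?h // (linZ (lin_ract _)) ract_E; last exact: size_mergeE.
  by rewrite !scalerA mulrC.
rewrite !mergeE_rcons_last // !nth_rcons h ltnSn ltnn eqxx.
rewrite (linZ (lin_ract _)) ract_E ?size_takel ?h // !scalerA.
rewrite -setUA; congr (_ *: _).
by rewrite mulrCA mmc_assoc mulrA.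
Qed.

Lemma ract_lact r S T (t : TT r.+2) :
  ract q (lb S) (lact q (lb T) t) = lact q (lb T) (ract q (lb S) t).
Proof.
apply: (lin_eq (lin_comp (lin_ract _) (lin_lact _)) (lin_comp (lin_lact _) (lin_ract _)))
  => -[|U ss] //; case/lastP: ss => [|mid V] //=; rewrite size_rcons => -[h].
rewrite lact_E ?size_rcons ?h // (linZ (lin_ract _)) -rcons_cons ract_E /= ?h //.
rewrite -[U :: rcons mid V]rcons_cons ract_E /= ?h // (linZ (lin_lact _)) lact_E ?size_rcons ?h //.
by rewrite !scalerA mulrC.
Qed.

Lemma lact_lact r S T (t : TT r.+1) :
  lact q (lb S) (lact q (lb T) t) = mmc S T *: lact q (lb (S :|: T)) t.
Proof.
apply: (lin_eq (lin_comp (lin_lact _) (lin_lact _)) (lin_scale _ (lin_lact _)))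
  => -[|U ss] //= [h].
by rewrite !lact_E // (linZ (lin_lact _)) lact_E // !scalerA mmc_assoc setUA.
Qed.

Lemma ract_ract r S T (t : TT r.+1) :
  ract q (lb S) (ract q (lb T) t) = mmc T S *: ract q (lb (T :|: S)) t.
Proof.
apply: (lin_eq (lin_comp (lin_ract _) (lin_ract _)) (lin_scale _ (lin_ract _)))
  => ss; case/lastP: ss => [|ss U] //; rewrite size_rcons => -[h].
by rewrite !ract_E // (linZ (lin_ract _)) ract_E // !scalerA mmc_assoc setUA.
Qed.

Lemma ract_tensR r S T (t : TT r) :
  ract q (lb S) (tensR t (lb T)) = mmc T S *: tensR t (lb (T :|: S)).
Proof.
apply: (lin_eq (lin_comp (lin_ract _) (lin_tensR _)) (lin_scale _ (lin_tensR _))) => ss h.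
by rewrite !tensR_E // ract_E.
Qed.

Lemma tensR_prep r S T (t : TT r) :
  tensR (prep (lb S) t) (lb T) = prep (lb S) (tensR t (lb T)).
Proof.
apply: (lin_eq (lin_comp (lin_tensR _) (lin_prep _)) (lin_comp (lin_prep _) (lin_tensR _))) => ss h.
by rewrite prep_E // tensR_E /= ?h // tensR_E // prep_E // size_rcons h.
Qed.

Lemma lact_tilde r S (t : TT r) :
  tensR (prep (lb S) t) (lb set0) = lact q (lb S) (tilde t).
Proof.
apply: (lin_eq (lin_comp (lin_tensR _) (lin_prep _)) (lin_comp (lin_lact _) lin_tilde)) => ss h.
rewrite prep_E // tensR_E /= ?h // tilde_E // lact_E ?size_rcons ?h //.
by rewrite mmc0r setU0 scale1r.
Qed.

Lemma ract_tilde r S (t : TT r) :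
  prep (lb set0) (tensR t (lb S)) = ract q (lb S) (tilde t).
Proof.
apply: (lin_eq (lin_comp (lin_prep _) (lin_tensR _)) (lin_comp (lin_ract _) lin_tilde)) => ss h.
rewrite tensR_E // prep_E ?size_rcons ?h // tilde_E // -[set0 :: rcons ss set0]rcons_cons ract_E /= ?h //.
by rewrite mmc0l set0U scale1r.
Qed.


Lemma two_neq0 (hc : [pchar k] =i pred0) : (2%:R : k) != 0.
Proof. by have := hc 2%N; rewrite !inE /= => ->. Qed.

Lemma antisym_sum0 r (G : 'I_n -> 'I_n -> TT r) : (2%:R : k) != 0 ->
  (forall i j, G i j = - G j i) -> \sum_i \sum_j G i j = 0.
Proof.
move=> h2 hG; set s := \sum_i \sum_j G i j.
have hs : s = - s.
  rewrite {1}/s exchange_big /= /s -sumrN; apply: eq_bigr => i _.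
  by rewrite -sumrN; apply: eq_bigr => j _; rewrite hG.
have : (2%:R : k) *: s = 0 by rewrite scaler_nat mulr2n {1}hs addNr.
by move/eqP; rewrite scaler_eq0 (negbTE h2) /= => /eqP.
Qed.

Lemma bsubE (b : mvec n) l j : bsub b l j = if j == l then (b j).-1 else b j.
Proof. by rewrite ffunE. Qed.

Lemma bsubC (b : mvec n) l j : bsub (bsub b l) j = bsub (bsub b j) l.
Proof.
apply/ffunP => i; rewrite !bsubE.
case: (eqVneq i j) => hij; case: (eqVneq i l) => hil; rewrite ?hij ?hil ?eqxx //=.
Qed.

Lemma condC (b : mvec n) l j :
  (0 < b l)%N && (0 < bsub b l j)%N = (0 < b j)%N && (0 < bsub b j l)%N.
Proof.
rewrite !bsubE; case: (eqVneq j l) => [->|hjl] //. by rewrite andbC.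

Qed.

Lemma prod_bsub (P : pred 'I_n) (f : 'I_n -> k) (b : mvec n) l : (0 < b l)%N ->
  \prod_(j < n | P j) f j ^+ b j =
  (\prod_(j < n | P j) f j ^+ bsub b l j) * (if P l then f l else 1).
Proof.
move=> hb; case: ifP => Pl.
  rewrite (bigD1 l) //= [in RHS](bigD1 l) //= bsubE eqxx.
  have -> : \prod_(i < n | P i && (i != l)) f i ^+ bsub b l i =
            \prod_(i < n | P i && (i != l)) f i ^+ b i.
    by apply: eq_bigr => i /andP[_ hi]; rewrite bsubE (negbTE hi).
  by rewrite mulrAC -exprSr prednK.



rewrite mulr1; apply: eq_bigr => j Pj; rewrite bsubE.
by case: eqP => // hj; move: Pj; rewrite hj Pl.
Qed.

Lemma mmc1 (a c : 'I_n) :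
  mmc [set a] [set c] = if a == c then 0 else if (c < a)%N then - q a c else 1.
Proof.
rewrite /mmc disjoints1 in_set1 /mono_coef big_set1.
case: eqP => //= _; rewrite big_mkcondr big_set1 /=.
by [].
Qed.


Definition alpha (b : mvec n) (l : 'I_n) := \prod_(j < n | (l < j)%N) q l j ^+ b j.
Definition delta (b : mvec n) (j : 'I_n) := \prod_(l < n | (l < j)%N) q l j ^+ b l.

Lemma bsub_pos (b : mvec n) l j : (0 < bsub b l j)%N -> (0 < b j)%N.
Proof. by rewrite bsubE; case: eqP => // _; case: (b j). Qed.

Lemma coefA (hq0 : forall i j, q i j != 0) (hqinv : forall i j, q j i = (q i j)^-1)
  (b : mvec n) (l l' : 'I_n) : (l < l')%N -> (0 < b l)%N -> (0 < b l')%N ->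
  alpha b l * alpha (bsub b l) l' * mmc [set l'] [set l] =
  - (alpha b l' * alpha (bsub b l') l * mmc [set l] [set l']).
Proof.
move=> hll' hl hl'.
rewrite /alpha (prod_bsub (fun j => (l < j)%N) (q l) hl') hll'.
rewrite [\prod_(j < n | (l' < j)%N) q l' j ^+ b j](prod_bsub (fun j => (l' < j)%N) (q l') hl).
have -> : (l' < l)%N = false by apply/negbTE; rewrite -leqNgt ltnW.
rewrite !mmc1.
have -> : (l' == l) = false by apply/negbTE; rewrite neq_ltn hll' orbT.
have -> : (l == l') = false by apply/negbTE; rewrite neq_ltn hll'.
rewrite hll'.
have -> : (l' < l)%N = false by apply/negbTE; rewrite -leqNgt ltnW.
rewrite (hqinv l l'); have := hq0 l l'; move: (q l l') => x hx.
field.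
by [].
Qed.

Lemma coefB (b : mvec n) (l j : 'I_n) : (0 < b l)%N -> (0 < b j)%N ->
  alpha b l * delta (bsub b l) j = delta b j * alpha (bsub b j) l.
Proof.
move=> hl hj; rewrite /alpha /delta.
rewrite (prod_bsub (fun i => (l < i)%N) (q l) hj).
rewrite [\prod_(i < n | (i < j)%N) q i j ^+ b i](prod_bsub (fun i => (i < j)%N) (fun i => q i j) hl).
by rewrite /=; ring.
Qed.

Lemma fT_S m (b : mvec n) : fT q m.+1 b = \sum_(l < n)
  (if (0 < b l)%N then alpha b l *: tensR (fT q m (bsub b l)) (lgen k l) else 0).
Proof. by []. Qed.

Lemma bar_d_fT (hc2 : (2%:R : k) != 0) (hq0 : forall i j, q i j != 0)
  (hqinv : forall i j, q j i = (q i j)^-1) m (b : mvec n) : bar_d q (fT q m.+1 b) = 0.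
Proof.
elim: m b => [|m IH] b.
  by rewrite /bar_d big1 // => w _; rewrite big_ord0 scaler0.
pose G l l' := if (0 < b l)%N && (0 < bsub b l l')%N then
   (alpha b l * alpha (bsub b l) l' * mmc [set l'] [set l]) *:
     tensR (fT q m (bsub (bsub b l) l')) (lb ([set l'] :|: [set l])) else 0.
transitivity ((-1) ^+ m *: \sum_l \sum_l' G l l'); last first.
  rewrite antisym_sum0 ?scaler0 // => l l'; rewrite /G condC.
  case: ifP => hc; last by rewrite oppr0.
  move/andP: hc => [hl' hl]; have hl0 := bsub_pos hl.
  rewrite bsubC setUC -scaleNr; congr (_ *: _).
  case: (ltngtP l l') => hll'.
  - by rewrite (coefA hq0 hqinv hll' hl0 hl').
  - by rewrite (coefA hq0 hqinv hll' hl' hl0) opprK.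
  - have e : l = l' by apply: val_inj.
    by rewrite e mmc1 eqxx !mulr0 oppr0.
rewrite fT_S (linS lin_bar_d) scaler_sumr; apply: eq_bigr => l _.
rewrite /G; case: ifP => hl /=; last first.
  by rewrite (lin0 lin_bar_d) big1 ?scaler0.
rewrite (linZ lin_bar_d) /lgen bar_d_tensR IH (lin0 (lin_tensR _)) add0r.
rewrite (linS (lin_ract _)) !scaler_sumr; apply: eq_bigr => l' _.
case: ifP => hl'; last by rewrite (lin0 (lin_ract _)) !scaler0.
rewrite (linZ (lin_ract _)) ract_tensR !scalerA; congr (_ *: _).
by rewrite /alpha; ring.
Qed.


Lemma bsum0 (b : mvec n) j : bsum b = 0%N -> b j = 0%N.
Proof. by move/eqP; rewrite /bsum (bigD1 j) //= addn_eq0 => /andP[/eqP ->]. Qed.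

Lemma fT_left m (b : mvec n) : fT q m.+1 b = \sum_(j < n)
  (if (0 < b j)%N then delta b j *: prep (lgen k j) (fT q m (bsub b j)) else 0).
Proof.
elim: m b => [|m IH] b.
  rewrite fT_S; apply: eq_bigr => l _; case: ifP => hl //.
  rewrite [fT q 0 _]/=; case: eqP => hs; last first.
    by rewrite (lin0 (lin_tensR _)) (lin0 (lin_prep _)) !scaler0.
  have hz : forall j, j != l -> b j = 0%N.
    by move=> j hj; have := bsum0 j hs; rewrite bsubE (negbTE hj).
  have -> : alpha b l = 1.
    rewrite /alpha big1 // => j hj; rewrite hz ?expr0 //.
    by apply/eqP => e; move: hj; rewrite e ltnn.
  have -> : delta b l = 1.
    rewrite /delta big1 // => j hj; rewrite hz ?expr0 //.
    by apply/eqP => e; move: hj; rewrite e ltnn.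
  rewrite !scale1r /lgen.
  by rewrite -[pure 0 [::]]/(E 0 [::]) tensR_E // prep_E.
pose H l j := if (0 < b l)%N && (0 < bsub b l j)%N then
   (alpha b l * delta (bsub b l) j) *:
     prep (lgen k j) (tensR (fT q m (bsub (bsub b l) j)) (lgen k l)) else 0.
transitivity (\sum_l \sum_j H l j).
  rewrite fT_S; apply: eq_bigr => l _; rewrite /H; case: ifP => hl; last first.
    by rewrite big1 // => j _; rewrite hl.
  rewrite IH (linS (lin_tensR _)) scaler_sumr; apply: eq_bigr => j _.
  rewrite andTb; case: ifP => hj; last by rewrite (lin0 (lin_tensR _)) scaler0.
  by rewrite (linZ (lin_tensR _)) /lgen tensR_prep scalerA.
rewrite exchange_big /=; apply: eq_bigr => j _; case: ifP => hj; last first.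
  by rewrite big1 // => l _; rewrite /H condC hj andFb.
rewrite (linS (lin_prep _)) scaler_sumr; apply: eq_bigr => l _.
rewrite /H condC hj andTb; case: ifP => hl; last by rewrite (lin0 (lin_prep _)) scaler0.
rewrite (linZ (lin_prep _)) scalerA bsubC coefB //.
exact: (bsub_pos hl).
Qed.

Lemma main2 (hc2 : (2%:R : k) != 0) (hq0 : forall i j, q i j != 0)
  (hqinv : forall i j, q j i = (q i j)^-1) m (b : mvec n) :
  bar_d q (ftilde q m.+1 b) =
      \sum_(j < n)
        (if (0 < b j)%N then
           (\prod_(l < n | (l < j)%N) q l j ^+ b l) *: lact q (lgen k j) (ftilde q m (bsub b j))
           + ((-1) ^+ m.+1 * \prod_(l < n | (j < l)%N) q j l ^+ b l)
               *: ract q (lgen k j) (ftilde q m (bsub b j))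
         else 0).
Proof.
rewrite /ftilde tilde_split bar_d_prep lact_one bar_d_tensR (bar_d_fT hc2 hq0 hqinv).
rewrite (lin0 (lin_tensR _)) add0r ract_one (linZ (lin_prep _)).
have h1 : tensR (fT q m.+1 b) (lb set0) = \sum_(j < n)
    (if (0 < b j)%N then delta b j *: lact q (lgen k j) (tilde (fT q m (bsub b j))) else 0).
  rewrite fT_left (linS (lin_tensR _)); apply: eq_bigr => j _; case: ifP => // hj.
    by rewrite (linZ (lin_tensR _)) /lgen lact_tilde.
  by rewrite (lin0 (lin_tensR _)).
have h2 : prep (lb set0) (fT q m.+1 b) = \sum_(j < n)
    (if (0 < b j)%N then alpha b j *: ract q (lgen k j) (tilde (fT q m (bsub b j))) else 0).
  rewrite fT_S (linS (lin_prep _)); apply: eq_bigr => j _; case: ifP => // hj.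
    by rewrite (linZ (lin_prep _)) /lgen ract_tilde.
  by rewrite (lin0 (lin_prep _)).
rewrite h1 h2 scaler_sumr -sumrN -big_split; apply: eq_bigr => j _.
case: ifP => hj /=; last by rewrite scaler0 oppr0 addr0.
by rewrite scalerA -scaleNr exprS mulN1r mulNr.
Qed.


Lemma lmul_lbE S (x : LL) : lmul q (lb S) x = \sum_T x T *: mono_mul q S T.
Proof.
rewrite /lmul (bigD1 S) //= [X in _ + X]big1 ?addr0; last first.
  by move=> S' hS'; rewrite big1 // => T _; rewrite lbE (negbTE hS') mul0r scale0r.
by apply: eq_bigr => T _; rewrite lbE eqxx mul1r.
Qed.

Lemma lmul_rbE (x : LL) T : lmul q x (lb T) = \sum_S x S *: mono_mul q S T.
Proof.
rewrite /lmul; apply: eq_bigr => S _.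
rewrite (bigD1 T) //= [X in _ + X]big1 ?addr0; last first.
  by move=> T' hT'; rewrite lbE (negbTE hT') mulr0 scale0r.
by rewrite lbE eqxx mulr1.
Qed.

Lemma lmul_lS (a x : LL) : lmul q a x = \sum_S a S *: lmul q (lb S) x.
Proof.
under [RHS]eq_bigr do rewrite lmul_lbE.
rewrite /lmul; apply: eq_bigr => S _; rewrite scaler_sumr.
by apply: eq_bigr => T _; rewrite scalerA.
Qed.

Lemma lmul_rS (x c : LL) : lmul q x c = \sum_T c T *: lmul q x (lb T).
Proof.
under [RHS]eq_bigr do rewrite lmul_rbE.
rewrite /lmul exchange_big /=; apply: eq_bigr => T _; rewrite scaler_sumr.
by apply: eq_bigr => S _; rewrite scalerA mulrC.
Qed.

Lemma lact_lS r (a : LL) (t : TT r.+1) : lact q a t = \sum_S a S *: lact q (lb S) t.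
Proof.
rewrite /lact; under [RHS]eq_bigr do rewrite scaler_sumr.
rewrite exchange_big /=; apply: eq_bigr => w _.
under eq_bigr do rewrite scalerA mulrC -scalerA.
rewrite -scaler_sumr; congr (_ *: _).
rewrite wseqE; have := size_wl w; case: (wl w) => [|U ss] //= _.
rewrite lmul_lS (pure_catS (s1 := [::])) //; apply: eq_bigr => S _.
by rewrite (pure_catZ (s1 := [::])).
Qed.

Lemma ract_lS r (c : LL) (t : TT r.+1) : ract q c t = \sum_S c S *: ract q (lb S) t.
Proof.
rewrite /ract; under [RHS]eq_bigr do rewrite scaler_sumr.
rewrite exchange_big /=; apply: eq_bigr => w _.
under eq_bigr do rewrite scalerA mulrC -scalerA.
rewrite -scaler_sumr; congr (_ *: _).
rewrite wseqE; have := size_wl w; case/lastP: (wl w) => [|ss U] //.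
rewrite size_rcons => -[h]; rewrite map_rcons.
rewrite (match_rcons (fun x => lmul q x c)).
under eq_bigr do rewrite (match_rcons (fun x => lmul q x (lb _))).
rewrite lmul_rS -cats1 pure_catS ?size_map ?h //; apply: eq_bigr => S _.
by rewrite pure_catZ ?size_map ?h // cats1.
Qed.

Lemma lactDa r (a a' : LL) (t : TT r.+1) : lact q (a + a') t = lact q a t + lact q a' t.
Proof.
rewrite !(lact_lS (r := r)) -big_split; apply: eq_bigr => S _.
by rewrite ffunE scalerDl.
Qed.
Lemma lactZa r d (a : LL) (t : TT r.+1) : lact q (d *: a) t = d *: lact q a t.
Proof.
rewrite !(lact_lS (r := r)) scaler_sumr; apply: eq_bigr => S _.
by rewrite ffunE scalerA.
Qed.
Lemma lact0a r (t : TT r.+1) : lact q 0 t = 0.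
Proof. by rewrite -(scale0r (0 : LL)) lactZa scale0r. Qed.
Lemma lactSa r (t : TT r.+1) I (s : seq I) (P : pred I) F :
  lact q (\sum_(i <- s | P i) F i) t = \sum_(i <- s | P i) lact q (F i) t.
Proof. exact: (big_morph (fun a => lact q a t) (fun a a' => lactDa a a' t) (lact0a t)). Qed.

Lemma ractDa r (a a' : LL) (t : TT r.+1) : ract q (a + a') t = ract q a t + ract q a' t.
Proof.
rewrite !(ract_lS (r := r)) -big_split; apply: eq_bigr => S _.
by rewrite ffunE scalerDl.
Qed.
Lemma ractZa r d (a : LL) (t : TT r.+1) : ract q (d *: a) t = d *: ract q a t.
Proof.
rewrite !(ract_lS (r := r)) scaler_sumr; apply: eq_bigr => S _.
by rewrite ffunE scalerA.
Qed.
Lemma ract0a r (t : TT r.+1) : ract q 0 t = 0.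
Proof. by rewrite -(scale0r (0 : LL)) ractZa scale0r. Qed.
Lemma ractSa r (t : TT r.+1) I (s : seq I) (P : pred I) F :
  ract q (\sum_(i <- s | P i) F i) t = \sum_(i <- s | P i) ract q (F i) t.
Proof. exact: (big_morph (fun a => ract q a t) (fun a a' => ractDa a a' t) (ract0a t)). Qed.


Lemma bar_d_lactG r a (t : TT r.+2) : bar_d q (lact q a t) = lact q a (bar_d q t).
Proof.
rewrite !(lact_lS (r := _)) (linS lin_bar_d); apply: eq_bigr => S _.
by rewrite (linZ lin_bar_d) bar_d_lact.
Qed.

Lemma bar_d_ractG r c (t : TT r.+2) : bar_d q (ract q c t) = ract q c (bar_d q t).
Proof.
rewrite !(ract_lS (r := _)) (linS lin_bar_d); apply: eq_bigr => S _.
by rewrite (linZ lin_bar_d) bar_d_ract.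
Qed.

Lemma lact_lactG r a x (t : TT r.+1) : lact q a (lact q x t) = lact q (lmul q a x) t.
Proof.
rewrite [RHS]lactSa lact_lS; apply: eq_bigr => S _.
rewrite lactSa (lact_lS x) (linS (lin_lact _)) scaler_sumr; apply: eq_bigr => T _.
by rewrite lactZa (linZ (lin_lact _)) lact_lact mono_mulE lactZa !scalerA.
Qed.

Lemma ract_ractG r c x (t : TT r.+1) : ract q c (ract q x t) = ract q (lmul q x c) t.
Proof.
rewrite [RHS]ractSa (ract_lS x) (linS (lin_ract _)); apply: eq_bigr => T _.
rewrite (linZ (lin_ract _)) (ract_lS c) /= (ractSa (r := r)) scaler_sumr; apply: eq_bigr => S _.
rewrite ractZa ract_ract mono_mulE ractZa !scalerA //.
Qed.

Lemma ract_lactG r c x (t : TT r.+2) : ract q c (lact q x t) = lact q x (ract q c t).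
Proof.
rewrite (ract_lS c) (lact_lS x) [in RHS](ract_lS c) (linS (lin_lact _)).
transitivity (\sum_S \sum_T (c S * x T) *: lact q (lb T) (ract q (lb S) t)).
  apply: eq_bigr => S _; rewrite (linS (lin_ract _)) scaler_sumr; apply: eq_bigr => T _.
  by rewrite (linZ (lin_ract _)) ract_lact scalerA.
apply: eq_bigr => S _.
rewrite (linZ (lin_lact _)) (lact_lS x) scaler_sumr; apply: eq_bigr => T _.
by rewrite scalerA.
Qed.


Lemma all_flat (T : Type) (a : pred T) (ss : seq (seq T)) :
  all a (flatten ss) = all (all a) ss.
Proof. by elim: ss => //= s ss IH; rewrite all_cat IH. Qed.

Lemma bsum_bsub (b : mvec n) j : (0 < b j)%N -> bsum (bsub b j) = (bsum b).-1.
Proof.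
move=> hj; rewrite /bsum (bigD1 j) //= [in RHS](bigD1 j) //= bsubE eqxx.
have -> : (\sum_(i < n | i != j) bsub b j i = \sum_(i < n | i != j) b i)%N.
  by apply: eq_bigr => i hi; rewrite bsubE (negbTE hi).
by rewrite -subn1 addnBAC // subn1.
Qed.

Definition pl m (x : LL * mvec n * LL) : seq (LL * mvec n * LL) :=
   flatten [seq (if (0 < x.1.2 j)%N then
        [:: (delta x.1.2 j *: lmul q x.1.1 (lgen k j), bsub x.1.2 j, x.2);
            (((-1) ^+ m.+1 * alpha x.1.2 j) *: x.1.1, bsub x.1.2 j, lmul q (lgen k j) x.2)]
        else [::]) | j <- index_enum 'I_n].

Lemma part1 (hc2 : (2%:R : k) != 0) (hq0 : forall i j, q i j != 0)
  (hqinv : forall i j, q j i = (q i j)^-1) m (t : TT m.+3) :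
  @inP k n q m.+1 t -> @inP k n q m (bar_d q t).
Proof.
move=> [s [hs ->]]; exists (flatten (map (pl m) s)); split.
  rewrite all_flat all_map; apply/allP => x hx.
  have /eqP hb := allP hs x hx.
  rewrite /= /pl all_flat all_map; apply/allP => j _ /=.
  by case: ifP => hj //=; rewrite bsum_bsub // hb eqxx.
rewrite (linS lin_bar_d) big_flatten big_map /=; apply: eq_bigr => x _.
rewrite bar_d_lactG bar_d_ractG main2 // (linS (lin_ract _)) (linS (lin_lact _)).
rewrite /pl big_flatten big_map; apply: eq_bigr => j _.
case: ifP => hj; last by rewrite big_nil (lin0 (lin_ract _)) (lin0 (lin_lact _)).
rewrite big_cons big_cons big_nil /= addr0.
rewrite (linD (lin_ract _)) (linD (lin_lact _)); congr (_ + _).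
  by rewrite !(linZ (lin_ract _)) !(linZ (lin_lact _)) ract_lactG lact_lactG lactZa.
by rewrite !(linZ (lin_ract _)) !(linZ (lin_lact _)) ract_ractG lactZa.
Qed.

End S.

Unset Implicit Arguments.
Theorem lemma3p3 (k : fieldType) (n : nat) (q : 'I_n -> 'I_n -> k)
  (hchar : [pchar k] =i pred0)
  (hq0 : forall i j, q i j != 0)
  (hqinv : forall i j, q j i = (q i j)^-1)
  (hqdiag : forall i, q i i = -1) :
  (forall (m : nat) (t : Tens k n m.+3),
      @inP k n q m.+1 t -> @inP k n q m (bar_d q t))
  /\
  (forall (m : nat) (b : mvec n), bsum b = m.+1 ->
      bar_d q (ftilde q m.+1 b) =
      \sum_(j < n)
        (if (0 < b j)%N then
           (\prod_(l < n | (l < j)%N) q l j ^+ b l) *: lact q (lgen k j) (ftilde q m (bsub b j))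
           + ((-1) ^+ m.+1 * \prod_(l < n | (j < l)%N) q j l ^+ b l)
               *: ract q (lgen k j) (ftilde q m (bsub b j))
         else 0)).
Proof.
split.
  by move=> m t; apply: part1 => //; apply: two_neq0.
by move=> m b _; apply: main2 => //; apply: two_neq0.
Qed.
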